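(* Let $\mu$ be an Ising model on $\{-1,1\}^p$ with $\ell_1$-width at most $\gamma>0$, fix $u\in[p]$, and define $\mathcal R^*(\theta)=\mathbb E_\mu\exp\big(-\theta\sigma_u-\sigma_u\sum_{j\ne u}\theta^*_{u,j}\sigma_j\big)$ for $\theta\in\mathbb R$. Then for every $\theta\in[-\gamma,\gamma]$, \[ \mathcal R^*(\theta)-\mathcal R^*(\theta^*_u)-(\mathcal R^* )'(\theta^*_u)(\theta-\theta^*_u)\ \ge\ \frac{e^{-\gamma}}{2+2\gamma}(\theta-\theta^*_u)^2 . \]
   Context: Ising model: $\mu(\underline\sigma)\propto\exp\big(\sum_{\{u,v\}}\theta^*_{u,v}\sigma_u\sigma_v+\sum_u\theta^*_u\sigma_u\big)$ on $\{-1,1\}^p$, first sum over unordered pairs of distinct indices, symmetric couplings; $\ell_1$-width at most $\gamma$ means $\sum_{v\ne u}|\theta^*_{u,v}|+|\theta^*_u|\le\gamma$ for all $u$. *)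

(* Defs.v *)
From HB Require Import structures.
From mathcomp Require Import all_boot all_order all_algebra.
From mathcomp Require Import all_classical all_reals all_analysis.
Set Implicit Arguments. Unset Strict Implicit. Unset Printing Implicit Defensive.
Import Order.TTheory GRing.Theory Num.Theory.
Local Open Scope ring_scope.

Section Ising.
Variable R : realType.
Variable p : nat.

Definition config := {ffun 'I_p -> bool}.
Definition spin (s : config) (i : 'I_p) : R := if s i then 1 else -1.

Definition ising_params (J : 'I_p -> 'I_p -> R) : Prop :=
  (forall u v, J u v = J v u) /\ (forall u, J u u = 0).

Definition ising_energy (J : 'I_p -> 'I_p -> R) (h : 'I_p -> R) (s : config) : R :=
  \sum_(u : 'I_p) \sum_(v : 'I_p | (u < v)%N) J u v * spin s u * spin s v
  + \sum_(u : 'I_p) h u * spin s u.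

Definition partition_fn (J : 'I_p -> 'I_p -> R) (h : 'I_p -> R) : R := \sum_(s : config) expR (ising_energy J h s).

Definition ising_mu (J : 'I_p -> 'I_p -> R) (h : 'I_p -> R) (s : config) : R := expR (ising_energy J h s) / partition_fn J h.

Definition l1_width_le (J : 'I_p -> 'I_p -> R) (h : 'I_p -> R) (gamma : R) : Prop :=
  forall u : 'I_p, \sum_(v : 'I_p | v != u) `|J u v| + `|h u| <= gamma.

Definition Rstar (J : 'I_p -> 'I_p -> R) (h : 'I_p -> R) (u : 'I_p) (theta : R) : R :=
  \sum_(s : config) ising_mu J h s *
    expR (- theta * spin s u - spin s u * \sum_(j : 'I_p | j != u) J u j * spin s j).
End Ising.

(* Main.v *)
Require Import Defs.
From HB Require Import structures.
From mathcomp Require Import all_boot all_order all_algebra.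
From mathcomp Require Import all_classical all_reals all_analysis.
From mathcomp Require Import ring lra.
Import Order.TTheory GRing.Theory Num.Theory.
Import numFieldNormedType.Exports.
Local Open Scope ring_scope.

Section Helpers.
Variable R : realType.
Lemma is_derive_aff (k d t : R) :
  is_derive t 1 (fun x => k * x + d) k.
Proof.
have H := @is_deriveD R R R (k *: id) (cst d) t 1 (k *: (1:R)) 0
   (@is_deriveZ R R R id k t 1 1 (@is_derive_id R R t 1)) (@is_derive_cst R R R d t 1).
by rewrite addr0 /GRing.scale /= mulr1 in H.
Qed.

Lemma is_derive_expR_aff (k d t : R) :
  is_derive t 1 (fun x => expR (k * x + d)) (k * expR (k * t + d)).
Proof.
have hf : forall y : R, derivable (fun x => k * x + d) y 1.
  move=> y; apply: ex_derive; exact: is_derive_aff.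
have he : forall y : R, derivable (@expR R) y 1 by move=> y; exact: derivable_expR.
have -> : (fun x => expR (k * x + d)) = (@expR R) \o (fun x => k * x + d) by [].
apply: DeriveDef.
  apply/derivable1_diffP; apply: differentiable_comp; apply/derivable1_diffP; [exact: hf|exact: he].
rewrite -derive1E derive1_comp //.
rewrite !derive1E [X in X * _]derive_val.
have -> : 'D_1 (fun x : R => k * x + d) t = k by rewrite (@derive_val _ _ _ _ _ _ _ (is_derive_aff k d t)).
by rewrite mulrC.
Qed.
Lemma mono_helper (f df : R -> R) (a b : R) : a <= b ->
  (forall t : R, is_derive t 1 f (df t)) -> (forall t, a <= t <= b -> 0 <= df t) ->
  f a <= f b.
Proof.
move=> ab hd hpos.
have cf : continuous (f : R -> R).
  move=> x; apply: differentiable_continuous; apply/derivable1_diffP.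
  apply: ex_derive; exact: hd.
have [|c cab E] := MVT_segment ab (fun x _ => hd x).
  exact/continuous_subspaceT/cf.
rewrite -subr_ge0 E mulr_ge0 ?subr_ge0 //.
apply: hpos; by rewrite in_itv /= in cab.
Qed.

Lemma dF (t : R) : is_derive t 1 (fun t => expR t - 1 - t - t * t / 2) (expR t - 1 - t).
Proof.
have -> : (fun t : R => expR t - 1 - t - t * t / 2) = (@expR R) - cst 1 - id - (fun t => t * t / 2).
  by apply/funext => x.
apply: is_derive_eq.
rewrite !scaler0 add0r subr0 /GRing.scale /= !mulr1.
have -> : 2^-1 * (t + t) = t :> R by field.
by [].
Qed.

Lemma dG (t : R) : is_derive t 1 (fun t => (t - 2) * expR t + t) ((t - 1) * expR t + 1).
Proof.
have -> : (fun t : R => (t - 2) * expR t + t) = ((id - cst 2) * (@expR R)) + id.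
  by apply/funext => x.
apply: is_derive_eq.
rewrite /GRing.scale /= subr0.
have -> : (id - cst 2) t = t - 2 :> R by [].
ring.
Qed.

Lemma phi_bound (x : R) : x ^+ 2 <= (2 + `|x|) * (expR x - 1 - x).
Proof.
have p0 : 0 <= expR x - 1 - x by have := expR_ge1Dx x; lra.
have [x0|x0] := leP 0 x.
  have := mono_helper _ _ _ _ x0 dF.
  rewrite expR0 => /(_ _) H.
  have {}H : 1 - 1 - 0 - 0 * 0 / 2 <= expR x - 1 - x - x * x / 2.
    apply: H => t /andP[t0 _]; have := expR_ge1Dx t; lra.
  rewrite ger0_norm //; nra.
have := mono_helper _ _ _ _ (ltW x0) dG.
rewrite expR0 => /(_ _) H.
have {}H : (x - 2) * expR x + x <= (0 - 2) * 1 + 0.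
  apply: H => t /andP[_ t0].
  have h1 := expR_ge1Dx (- t).
  have h2 := expRxMexpNx_1 t.
  have h3 := expR_ge0 t.
  nra.
rewrite ltr0_norm //; nra.
Qed.

Lemma phi_bound2 (x c : R) : `|x| <= c -> x ^+ 2 / (2 + c) <= expR x - 1 - x.
Proof.
move=> xc.
have p0 : 0 <= expR x - 1 - x by have := expR_ge1Dx x; lra.
have n0 := normr_ge0 x.
have hb := phi_bound x.
rewrite ler_pdivrMr; last lra.
nra.
Qed.

Lemma is_derive_fsum (I : finType) (g : I -> R -> R) (dg : I -> R) (t : R) :
  (forall i, is_derive t 1 (g i) (dg i)) ->
  is_derive t 1 (fun x => \sum_i g i x) (\sum_i dg i).
Proof.
move=> H; rewrite -fct_sumE.
elim/big_ind2: _ => //.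
- exact: is_derive_cst.
- by move=> f1 d1 f2 d2 h1 h2; apply: is_deriveD.
Qed.

Lemma is_derive_term (c k d t : R) :
  is_derive t 1 (fun x => c * expR (k * x + d)) (c * (k * expR (k * t + d))).
Proof.
have := is_deriveZ c (is_derive_expR_aff k d t).
by [].
Qed.
End Helpers.

Theorem mainTheorem9 (R : realType) (p : nat) (J : 'I_p -> 'I_p -> R)
  (h : 'I_p -> R) (gamma : R) (u : 'I_p) :
  ising_params J -> 0 < gamma -> l1_width_le J h gamma ->
  forall theta : R, -gamma <= theta <= gamma ->
    Rstar J h u theta - Rstar J h u (h u)
      - (derive1 (Rstar J h u) (h u)) * (theta - h u)
    >= expR (- gamma) / (2 + 2 * gamma) * (theta - h u) ^+ 2.
Proof.
move=> _ g0 hw theta /andP[tl tr].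
pose mu := ising_mu J h.
pose a (s : config p) : R := spin R s u.
pose m (s : config p) : R := \sum_(j : 'I_p | j != u) J u j * spin R s j.
pose k s := - a s.
pose d s := - (a s * m s).
pose E0 s := expR (k s * h u + d s).
pose dl := theta - h u.
have hwu := hw u.
have sJ0 : 0 <= \sum_(v : 'I_p | v != u) `|J u v| by apply: sumr_ge0 => v _.
have hu_le : `|h u| <= gamma by lra.
have a2 s : a s ^+ 2 = 1 by rewrite /a /spin; case: (s u); rewrite ?sqrrN expr1n.
have an s : `|a s| = 1 by rewrite /a /spin; case: (s u); rewrite ?normrN normr1.
have sn s j : `|spin R s j| = 1 by rewrite /spin; case: (s j); rewrite ?normrN normr1.
have mb s : `|m s| <= \sum_(v : 'I_p | v != u) `|J u v|.
  apply: (le_trans (ler_norm_sum _ _ _)); apply: ler_sum => j _.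
  by rewrite normrM sn mulr1.
have E0b s : expR (- gamma) <= E0 s.
  rewrite /E0 ler_expR.
  have -> : k s * h u + d s = - (a s * (h u + m s)) by rewrite /k /d; ring.
  rewrite lerN2; apply: (le_trans (ler_norm _)).
  rewrite normrM an mul1r; apply: (le_trans (ler_normD _ _)).
  have := mb s; lra.
have Zpos : 0 < partition_fn J h.
  rewrite /partition_fn (bigD1 [ffun => true]) //=.
  have h1 := expR_gt0 (ising_energy J h [ffun => true]).
  have h2 : 0 <= \sum_(s | s != [ffun => true]) expR (ising_energy J h s).
    by apply: sumr_ge0 => s _; exact: expR_ge0.
  lra.
have mu0 s : 0 <= mu s by rewrite /mu /ising_mu divr_ge0 ?expR_ge0 // ltW.
have mu1 : \sum_s mu s = 1.
  rewrite /mu /ising_mu -mulr_suml -/(partition_fn J h) mulfV //.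
  by rewrite gt_eqF.
have RE : Rstar J h u = fun x => \sum_s mu s * expR (k s * x + d s).
  apply/funext => x; rewrite /Rstar; apply: eq_bigr => s _.
  by congr (_ * expR _); rewrite /k /d /a /m; ring.
have DE : derive1 (Rstar J h u) (h u) = \sum_s mu s * (k s * E0 s).
  rewrite derive1E RE.
  apply: derive_val.
  apply: is_derive_fsum => s; exact: is_derive_term.
rewrite DE RE /=.
have LE : \sum_s mu s * expR (k s * theta + d s) - \sum_s mu s * expR (k s * h u + d s)
     - (\sum_s mu s * (k s * E0 s)) * (theta - h u)
   = \sum_s mu s * (E0 s * (expR (k s * dl) - 1 - k s * dl)).
  rewrite mulr_suml -!sumrB; apply: eq_bigr => s _.
  have -> : k s * theta + d s = (k s * h u + d s) + k s * dl by rewrite /dl; ring.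
  rewrite expRD -/(E0 s) /dl; ring.
rewrite LE.
have -> : expR (- gamma) / (2 + 2 * gamma) * (theta - h u) ^+ 2
   = \sum_s mu s * (expR (- gamma) * ((k s * dl) ^+ 2 / (2 + 2 * gamma))).
  rewrite (eq_bigr (fun s => mu s * (expR (- gamma) * (dl ^+ 2 / (2 + 2 * gamma))))); last first.
    by move=> s _; rewrite exprMn /k sqrrN a2 mul1r.
  by rewrite -mulr_suml mu1 mul1r /dl; ring.
apply: ler_sum => s _; apply: ler_wpM2l => //.
apply: ler_pM.
- exact: expR_ge0.
- apply: divr_ge0; [exact: sqr_ge0 | lra].
- exact: E0b.
apply: phi_bound2.
rewrite normrM /k normrN an mul1r /dl.
apply: (le_trans (ler_normB _ _)).
have : `|theta| <= gamma by rewrite ler_norml; lra.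
lra.
Qed.
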